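(* Let $A$ be a real $n\times n$ matrix and $\mathbf{c},\mathbf{d}\in\mathbb{R}^n$ with $A+A^T=\mathbf{c}\mathbf{d}^T$, let $K=A-\tfrac12\mathbf{c}\mathbf{d}^T$, $d_{\min}=\min_id_i$, $d_{\max}=\max_id_i$, and define the correspondence $F$ on $[d_{\min},d_{\max}]$ by \[ F(\lambda)=\{\mathbf{d}^T\mathbf{x}:\ (\mathbf{x},\pi)\text{ is an optimal solution of }LP(\lambda)\text{ for some }\pi\in\mathbb{R}\}. \] Then: (i) for every $\lambda\in[d_{\min},d_{\max}]$, $F(\lambda)$ is a nonempty convex subset of $[d_{\min},d_{\max}]$; (ii) if $\lambda\in[d_{\min},d_{\max}]$ and $(\mathbf{x},\pi)$ is an optimal solution of $LP(\lambda)$ with $\mathbf{d}^T\mathbf{x}=\lambda$, then $\mathbf{x}$ is a symmetric Nash equilibrium of $(A,A^T)$; (iii) if $\mathbf{x}$ is a symmetric Nash equilibrium of $(A,A^T)$, then $\lambda=\mathbf{d}^T\mathbf{x}$ lies in $[d_{\min},d_{\max}]$ and $\lambda\in F(\lambda)$. Consequently the fixed points of $F$ are exactly the values $\mathbf{d}^T\mathbf{x}$ for symmetric Nash equilibria $\mathbf{x}$ of $(A,A^T)$.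
   Context: For fixed $\lambda\in\mathbb{R}$, $LP(\lambda)$ is the linear program in variables $\mathbf{x}\in\mathbb{R}^n,\pi\in\mathbb{R}$: maximize $\tfrac12\lambda\,\mathbf{x}^T\mathbf{c}-\pi$ subject to $K\mathbf{x}+\tfrac{\lambda}{2}\mathbf{c}\le\pi\mathbf{1}$ (componentwise), $\mathbf{x}\ge0$, $\sum_ix_i=1$; $\mathbf{1}$ is the all-ones vector. A probability vector $\mathbf{x}$ is a symmetric Nash equilibrium of $(A,A^T)$ if $(\mathbf{x},\mathbf{x})$ is a Nash equilibrium, equivalently, $x_i>0$ implies $(A\mathbf{x})_i=\max_k(A\mathbf{x})_k$. *)

(* Defs.v *)
From HB Require Import structures.
From mathcomp Require Import all_boot all_order all_algebra.
Set Implicit Arguments. Unset Strict Implicit. Unset Printing Implicit Defensive.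
Import Order.TTheory GRing.Theory Num.Theory.
Local Open Scope ring_scope.

Section Defs.
Variable (R : realFieldType) (n : nat).

Definition dotv (u v : 'cV[R]_n) : R := \sum_(i < n) u i 0 * v i 0.

Definition Kmat (A : 'M[R]_n) (c d : 'cV[R]_n) : 'M[R]_n :=
  A - 2^-1 *: (c *m d^T).

Definition prob_vec (x : 'cV[R]_n) : Prop :=
  (forall i, 0 <= x i 0) /\ \sum_(i < n) x i 0 = 1.

Definition LP_feasible (K : 'M[R]_n) (c : 'cV[R]_n) (lam : R)
    (x : 'cV[R]_n) (pi : R) : Prop :=
  (forall i, (K *m x) i 0 + lam / 2 * c i 0 <= pi) /\ prob_vec x.

Definition LP_obj (c : 'cV[R]_n) (lam : R) (x : 'cV[R]_n) (pi : R) : R :=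
  lam / 2 * dotv x c - pi.

Definition LP_optimal (K : 'M[R]_n) (c : 'cV[R]_n) (lam : R)
    (x : 'cV[R]_n) (pi : R) : Prop :=
  LP_feasible K c lam x pi /\
  forall x' pi', LP_feasible K c lam x' pi' ->
    LP_obj c lam x' pi' <= LP_obj c lam x pi.

Definition Fcorr (K : 'M[R]_n) (c d : 'cV[R]_n) (lam : R) (v : R) : Prop :=
  exists x pi, LP_optimal K c lam x pi /\ v = dotv d x.

(* d_min, d_max (the default value is an entry of d when n > 0) *)
Definition dmin (d : 'cV[R]_n) : R :=
  \big[Num.min/head 0 [seq d i 0 | i <- enum 'I_n]]_(i < n) d i 0.
Definition dmax (d : 'cV[R]_n) : R :=
  \big[Num.max/head 0 [seq d i 0 | i <- enum 'I_n]]_(i < n) d i 0.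

Definition sym_nash (A : 'M[R]_n) (x : 'cV[R]_n) : Prop :=
  prob_vec x /\
  forall i, 0 < x i 0 -> forall k, (A *m x) k 0 <= (A *m x) i 0.

Definition convex_set (S : R -> Prop) : Prop :=
  forall a b t, S a -> S b -> 0 <= t -> t <= 1 -> S (t * a + (1 - t) * b).

End Defs.

(* Main.v *)
Require Import Defs.
From HB Require Import structures.
From mathcomp Require Import all_boot all_order all_algebra.
From mathcomp Require Import ring lra.
Import Order.TTheory GRing.Theory Num.Theory.
Local Open Scope ring_scope.
Set Implicit Arguments. Unset Strict Implicit. Unset Printing Implicit Defensive.

Section Ville.
Variable R : realFieldType.

Lemma sum_ind (J : finType) (f : J -> R) (a : J) :
  \sum_l f l * (a == l)%:R = f a.
Proof.
rewrite (bigD1 a) //= eqxx mulr1 big1 ?addr0 // => l hl.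
by rewrite eq_sym (negbTE hl) mulr0.
Qed.

Definition Wf (J : finType) (r : J -> R) (f : J -> R)
  (q : ({j : J | r j <= 0} + {p : J * J | (r p.1 <= 0) && (0 < r p.2)})%type) : R :=
  match q with
  | inl j => f (val j)
  | inr p => r (val p).2 * f (val p).1 - r (val p).1 * f (val p).2
  end.
Arguments Wf {J} r f q.

Lemma Wf_ind (J : finType) (r : J -> R) f q :
  \sum_l f l * Wf r (fun l' => (l' == l)%:R) q = Wf r f q.
Proof.
case: q => [j|p] /=; first by rewrite sum_ind.
under eq_bigr => l _ do rewrite mulrBr mulrCA [f l * (_ * _)]mulrCA.
by rewrite sumrB -!mulr_sumr !sum_ind.
Qed.

Lemma Wf_lin (I J : finType) (r : J -> R) (y : I -> R) (M : I -> J -> R) q :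
  Wf r (fun l => \sum_i y i * M i l) q = \sum_i y i * Wf r (M i) q.
Proof.
case: q => [j|p] //=.
rewrite !mulr_sumr -sumrB; apply: eq_bigr => i _; ring.
Qed.

Lemma exists_pos (J : finType) (x : J -> R) : 0 < \sum_j x j -> exists j, 0 < x j.
Proof.
move=> h; case: (boolP [exists j, 0 < x j]) => [/existsP //|/existsPn hn].
have : \sum_j x j <= 0 by apply: sumr_le0 => j _; rewrite leNgt; exact: hn.
by rewrite leNgt h.
Qed.

Lemma ville (m : nat) : forall (J : finType) (M : 'I_m -> J -> R),
  (exists x : J -> R, (forall j, 0 <= x j) /\ 0 < \sum_j x j /\
     forall i, \sum_j M i j * x j <= 0)
  \/ (exists y : 'I_m -> R, (forall i, 0 <= y i) /\
     forall j, 0 < \sum_i y i * M i j).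
Proof.
elim: m => [|m IH] J M.
  case: (pickP (fun _ : J => true)) => [j0 _|h].
  - left; exists (fun j => (j == j0)%:R); split; first by move=> j; rewrite ler0n.
    split; last by move=> [].
    rewrite (bigD1 j0) //= eqxx big1 ?addr0 ?ltr01 // => j /negbTE -> //.
  - by right; exists (fun _ => 0); split => // j; have := h j.
pose r := fun j => M ord_max j.
pose M' := fun (i : 'I_m) j => M (lift ord_max i) j.
case: (IH _ (fun i q => Wf r (M' i) q)) => [[x' [x'ge0 [x'pos x'le]]]|[y' [y'ge0 y'pos]]].
- left.
  pose x := fun l => \sum_q x' q * Wf r (fun l' => (l' == l)%:R) q.
  have xE : forall f, \sum_l f l * x l = \sum_q x' q * Wf r f q.
    move=> f; rewrite /x.
    under eq_bigr => l _ do rewrite mulr_sumr.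
    rewrite exchange_big /=; apply: eq_bigr => q _.
    rewrite -Wf_ind mulr_sumr; apply: eq_bigr => l _; ring.
  exists x; split; [|split].
  + move=> l; apply: sumr_ge0 => q _; apply: mulr_ge0 => //.
    case: q => [j|[[j k] /= /andP [hj hk]]] /=; first by rewrite ler0n.
    rewrite subr_ge0; apply: (@le_trans _ _ 0).
      by apply: mulr_le0_ge0 => //; rewrite ler0n.
    by apply: mulr_ge0; [exact: ltW|rewrite ler0n].
  + have -> : \sum_j x j = \sum_l (fun _ => 1) l * x l.
      by apply: eq_bigr => l _; rewrite mul1r.
    rewrite xE; have [q hq] := exists_pos x'pos.
    rewrite (bigD1 q) //=; apply: ltr_pwDl; last first.
      by apply: sumr_ge0 => q' _; apply: mulr_ge0 => //;
        case: q' => [j|[[j k] /= /andP [hj hk]]] /=; rewrite ?ler01 // !mulr1 subr_ge0;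
        apply: (le_trans hj); exact: ltW.
    apply: mulr_gt0 => //; case: q {hq} => [j|[[j k] /= /andP [hj hk]]] /=; rewrite ?ltr01 //.
    by rewrite !mulr1 subr_gt0; apply: (le_lt_trans hj).
  + move=> i; case: (unliftP ord_max i) => [i'|] ->.
    * rewrite (xE (M (lift ord_max i'))).
      apply: le_trans (x'le i'); rewrite le_eqVlt; apply/orP; left; apply/eqP.
      by apply: eq_bigr => q _; rewrite mulrC.
    * rewrite (xE (M ord_max)); apply: sumr_le0 => q _.
      apply: mulr_ge0_le0 => //.
      case: q => [[j hj]|[[j k] /= /andP [hj hk]]] //=.
      by rewrite /r mulrC subrr.
- right.
  pose a := fun l => \sum_i y' i * M' i l.
  have ha : forall q, 0 < Wf r a q.
    by move=> q; rewrite /a Wf_lin; exact: y'pos.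
  have haP : forall j, r j <= 0 -> 0 < a j.
    by move=> j hj; exact: (ha (inl (exist _ j hj))).
  have haQ : forall j k, r j <= 0 -> 0 < r k -> 0 < r k * a j - r j * a k.
    move=> j k hj hk.
    have hjk : (r (j, k).1 <= 0) && (0 < r (j, k).2) by rewrite hj hk.
    exact: (ha (inr (exist _ (j, k) hjk))).
  pose L := \big[Num.max/0]_(k | 0 < r k) (- a k / r k).
  pose U := \big[Num.min/(L + 1)]_(j | r j < 0) (a j / (- r j)).
  have L0 : 0 <= L.
    rewrite /L; apply: (big_rec (fun v => 0 <= v)) => // k v _ hv.
    by rewrite le_max hv orbT.
  have LF : forall k, 0 < r k -> - a k / r k <= L.
    by move=> k hk; rewrite /L (bigD1 k) //= le_max lexx.
  have UF : forall j, r j < 0 -> U <= a j / (- r j).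
    by move=> j hj; rewrite /U (bigD1 j) //= ge_min lexx.
  have LU : L < U.
    rewrite /U; apply: (big_rec (fun v => L < v)); first by rewrite ltrDl ltr01.
    move=> j v hj hv; rewrite lt_min hv andbT.
    have hj' : 0 < - r j by rewrite oppr_gt0.
    rewrite /L; apply: (big_rec (fun v => v < a j / - r j)).
      by apply: divr_gt0 => //; apply: haP; exact: ltW.
    move=> k w hk hw; rewrite gt_max hw andbT.
    have := haQ j k (ltW hj) hk.
    rewrite ltr_pdivlMr // mulrAC ltr_pdivrMr //.
    move: (a j) (a k) (r j) (r k) hj' hk => aj ak rj rk h1 h2 h3.
    nra.
  pose t := (L + U) / 2.
  have Lt : L < t by rewrite /t; lra.
  have tU : t < U by rewrite /t; lra.
  exists (fun i => if unlift ord_max i is Some i' then y' i' else t); split.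
    move=> i /=; case: (unliftP ord_max i) => [i'|] _ //; lra.
  move=> j; rewrite big_ord_recr /= unlift_none.
  have -> : \sum_(i < m) (if unlift ord_max (widen_ord (leqnSn m) i) is Some i' then y' i' else t) *
     M (widen_ord (leqnSn m) i) j = a j.
    apply: eq_bigr => i _; have -> : widen_ord (leqnSn m) i = lift ord_max i by apply/val_inj; rewrite /= /bump leqNgt ltn_ord.
    by rewrite liftK.
  rewrite -/(r j).
  case: (ltrgtP (r j) 0) => hj.
  + have h := lt_le_trans tU (UF j hj).
    rewrite ltr_pdivlMr ?oppr_gt0 // mulrN in h.
    move: h; move: (t * r j) (a j) => u v; lra.
  + have h := le_lt_trans (LF j hj) Lt.
    rewrite ltr_pdivrMr // in h.
    move: h; move: (t * r j) (a j) => u v; lra.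
  + by rewrite hj mulr0 addr0; apply: haP; rewrite hj.
Qed.
End Ville.

Section Skew.
Variables (R : realFieldType) (n : nat).

Lemma skew_quad (G : 'I_n -> 'I_n -> R) (hG : forall i j, G i j = - G j i)
  (y : 'I_n -> R) : \sum_i y i * \sum_j G i j * y j = 0.
Proof.
set S := \sum_i _.
have hS : S = - S.
  rewrite {1}/S.
  under eq_bigr => i _ do rewrite mulr_sumr.
  rewrite exchange_big /= /S -sumrN; apply: eq_bigr => j _.
  rewrite mulr_sumr -sumrN; apply: eq_bigr => i _.
  by rewrite hG; ring.
by move: hS; move: S => s; lra.
Qed.

Lemma skew_exists (hn : (0 < n)%N) (G : 'I_n -> 'I_n -> R)
  (hG : forall i j, G i j = - G j i) :
  exists x : 'I_n -> R, (forall j, 0 <= x j) /\ \sum_j x j = 1 /\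
    forall i, \sum_j G i j * x j <= 0.
Proof.
case: (ville G) => [[x [xge0 [xpos xle]]]|[y [yge0 ypos]]].
- set s := \sum_j x j in xpos *.
  exists (fun j => x j / s); split; [|split].
  + by move=> j; apply: divr_ge0 => //; exact: ltW.
  + by rewrite -mulr_suml divff // gt_eqF.
  + move=> i; have -> : \sum_j G i j * (x j / s) = (\sum_j G i j * x j) / s.
      by rewrite mulr_suml; apply: eq_bigr => j _; rewrite mulrA.
    by apply: mulr_le0_ge0 => //; rewrite invr_ge0 ltW.
- exfalso.
  have hq := skew_quad hG y.
  have hq' : \sum_j y j * \sum_i y i * G i j = - \sum_i y i * \sum_j G i j * y j.
    rewrite -sumrN; apply: eq_bigr => j _.
    rewrite -mulrN -sumrN; congr (_ * _); apply: eq_bigr => i _.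
    by rewrite hG; ring.
  rewrite hq oppr0 in hq'.
  case: (boolP [exists i, 0 < y i]) => [/existsP [i hi]|/existsPn hn'].
  + move: hq'; rewrite (bigD1 i) //= => h.
    have : 0 < y i * \sum_i0 y i0 * G i0 i + \sum_(j | j != i) y j * \sum_i0 y i0 * G i0 j.
      apply: ltr_pwDl; first by apply: mulr_gt0 => //; exact: ypos.
      by apply: sumr_ge0 => j _; apply: mulr_ge0 => //; exact: ltW.
    by rewrite h ltxx.
  + have := ypos (Ordinal hn).
    rewrite big1 ?ltxx // => i _.
    have : y i = 0 by apply/eqP; rewrite eq_le yge0 andbT leNgt hn'.
    by move=> ->; rewrite mul0r.
Qed.
End Skew.

Section Main.
Variables (R : realFieldType) (n : nat) (A : 'M[R]_n) (c d : 'cV[R]_n).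
Hypothesis hA : A + A^T = c *m d^T.

Let K := Kmat A c d.

Lemma hAij i j : A i j + A j i = c i 0 * d j 0.
Proof.
have := congr1 (fun M : 'M[R]_n => M i j) hA.
by rewrite !mxE big_ord1 !mxE.
Qed.

Lemma Kij i j : K i j = A i j - 2^-1 * (c i 0 * d j 0).
Proof. by rewrite /K /Kmat !mxE big_ord1 !mxE. Qed.

Lemma Kskew i j : K i j = - K j i.
Proof.
rewrite !Kij; have h1 := hAij i j; have h2 := hAij j i.
move: h1 h2; move: (A i j) (A j i) (c i 0 * d j 0) (c j 0 * d i 0) => a b u v.
move=> h1 h2; lra.
Qed.

Lemma KxE (x : 'cV[R]_n) i : (K *m x) i 0 = \sum_j K i j * x j 0.
Proof. by rewrite mxE. Qed.

Lemma AK (x : 'cV[R]_n) i :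
  (A *m x) i 0 = (K *m x) i 0 + 2^-1 * c i 0 * dotv d x.
Proof.
rewrite !mxE /dotv mulr_sumr -big_split /=; apply: eq_bigr => j _.
rewrite Kij; ring.
Qed.

Lemma quadK (x : 'cV[R]_n) : \sum_i x i 0 * (K *m x) i 0 = 0.
Proof.
apply: eq_trans (skew_quad Kskew (fun i => x i 0)); apply: eq_bigr => i _.
by rewrite KxE.
Qed.

Lemma sumAx (x : 'cV[R]_n) :
  \sum_i x i 0 * (A *m x) i 0 = 2^-1 * dotv d x * dotv x c.
Proof.
under eq_bigr => i _ do rewrite AK mulrDr.
rewrite big_split /= quadK add0r /dotv mulr_sumr; apply: eq_bigr => i _; ring.
Qed.

Lemma obj_le0 lam x pi : LP_feasible K c lam x pi -> LP_obj c lam x pi <= 0.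
Proof.
move=> [hf [hx0 hx1]].
have h : \sum_i x i 0 * ((K *m x) i 0 + lam / 2 * c i 0) <= pi.
  apply: (@le_trans _ _ (\sum_i x i 0 * pi)).
    by apply: ler_sum => i _; apply: ler_wpM2l.
  by rewrite -mulr_suml hx1 mul1r.
have e : \sum_i x i 0 * ((K *m x) i 0 + lam / 2 * c i 0) = lam / 2 * dotv x c.
  under eq_bigr => i _ do rewrite mulrDr.
  rewrite big_split /= quadK add0r /dotv mulr_sumr; apply: eq_bigr => i _; ring.
rewrite /LP_obj; rewrite e in h; rewrite subr_le0 //.
Qed.

Lemma exist0 (hn : (0 < n)%N) lam :
  exists x : 'cV[R]_n, LP_feasible K c lam x (lam / 2 * dotv x c).
Proof.
pose G := fun i j : 'I_n => K i j + lam / 2 * c i 0 - lam / 2 * c j 0.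
have hG : forall i j, G i j = - G j i.
  move=> i j; rewrite /G Kskew.
  by move: (K j i) (lam / 2 * c i 0) (lam / 2 * c j 0) => a b e; lra.
have [xf [x0 [x1 xle]]] := skew_exists hn hG.
exists (\col_k xf k); split; last first.
  by split; [move=> i; rewrite mxE|under eq_bigr do rewrite mxE].
move=> i; have := xle i.
have -> : \sum_j G i j * xf j =
    (K *m \col_k xf k) i 0 + lam / 2 * c i 0 - lam / 2 * dotv (\col_k xf k) c.
  rewrite KxE /dotv /G.
  under eq_bigr => j _ do rewrite mulrBl mulrDl.
  rewrite sumrB big_split /=.
  have -> : \sum_(j < n) lam / 2 * c i 0 * xf j = lam / 2 * c i 0 by rewrite -mulr_sumr x1 mulr1.
  rewrite mulr_sumr.
  congr (_ + _ - _); apply: eq_bigr => j _; rewrite !mxE //; ring.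
by rewrite subr_le0.
Qed.

Lemma opt_iff (hn : (0 < n)%N) lam x pi :
  LP_optimal K c lam x pi <-> LP_feasible K c lam x pi /\ 0 <= LP_obj c lam x pi.
Proof.
split.
- move=> [hf hopt]; split => //.
  have [x0 h0] := exist0 hn lam.
  apply: le_trans (hopt _ _ h0); by rewrite /LP_obj subrr.
- move=> [hf h]; split => // x' pi' hf'; exact: le_trans (obj_le0 hf') h.
Qed.

Lemma dmin_le i : dmin d <= d i 0.
Proof. by rewrite /dmin (bigD1 i) //= ge_min lexx. Qed.

Lemma le_dmax i : d i 0 <= dmax d.
Proof. by rewrite /dmax (bigD1 i) //= le_max lexx. Qed.

Lemma range x : prob_vec x -> dmin d <= dotv d x <= dmax d.
Proof.
move=> [x0 x1]; apply/andP; split.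
- rewrite -[dmin d]mulr1 -x1 mulr_sumr /dotv; apply: ler_sum => i _.
  by apply: ler_wpM2r => //; exact: dmin_le.
- rewrite -[dmax d]mulr1 -x1 mulr_sumr /dotv; apply: ler_sum => i _.
  by apply: ler_wpM2r => //; exact: le_dmax.
Qed.

End Main.

Theorem theorem4p5 (R : realFieldType) (n : nat) (A : 'M[R]_n)
    (c d : 'cV[R]_n) (hn : (0 < n)%N) (hA : A + A^T = c *m d^T) :
  let K := Kmat A c d in
  let F := Fcorr K c d in
  (* (i) *)
  (forall lam, dmin d <= lam <= dmax d ->
     (exists v, F lam v) /\ convex_set (F lam) /\
     (forall v, F lam v -> dmin d <= v <= dmax d)) /\
  (* (ii) *)
  (forall lam x pi, dmin d <= lam <= dmax d ->
     LP_optimal K c lam x pi -> dotv d x = lam -> sym_nash A x) /\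
  (* (iii) *)
  (forall x, sym_nash A x ->
     let lam := dotv d x in dmin d <= lam <= dmax d /\ F lam lam) /\
  (* consequence: fixed points of F are exactly the d^T x for symmetric NE x *)
  (forall lam, (dmin d <= lam <= dmax d /\ F lam lam) <->
     exists x, sym_nash A x /\ lam = dotv d x).
Proof.
move=> K F.
have part2 : forall lam x pi, LP_optimal K c lam x pi -> dotv d x = lam -> sym_nash A x.
  move=> lam x pi /(opt_iff hA hn) [[hf hp] hobj] hd; split => // i hi k.
  set V := lam / 2 * dotv x c.
  have hpV : pi <= V by move: hobj; rewrite /LP_obj subr_ge0.
  have hAk : forall k, (A *m x) k 0 <= V.
    move=> k'; apply: le_trans hpV; rewrite (AK A c d) hd.
    have := hf k'; congr (_ <= _); rewrite /K; ring.
  have hs : \sum_l x l 0 * (V - (A *m x) l 0) = 0.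
    under eq_bigr => l _ do rewrite mulrBr.
    rewrite sumrB (sumAx hA) hd -mulr_suml (proj2 hp) mul1r /V; ring.
  have hge : forall l, true -> 0 <= x l 0 * (V - (A *m x) l 0).
    by move=> l _; apply: mulr_ge0; [exact: (proj1 hp) | rewrite subr_ge0].
  have := psumr_eq0P hge hs (i := i) isT.
  move/eqP; rewrite mulf_eq0 (gt_eqF hi) /= subr_eq0 => /eqP <-.
  exact: hAk.
have part3 : forall x, sym_nash A x -> F (dotv d x) (dotv d x).
  move=> x [hp hN]; exists x, (dotv d x / 2 * dotv x c); split => //.
  apply/(opt_iff hA hn); split; last by rewrite /LP_obj subrr.
  split => // i.
  have hpos : 0 < \sum_l x l 0 by rewrite (proj2 hp) ltr01.
  have [l hl] := exists_pos hpos.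
  set M := (A *m x) l 0.
  have hsum : \sum_l x l 0 * (A *m x) l 0 = M.
    rewrite -[M]mul1r -(proj2 hp) mulr_suml; apply: eq_bigr => l' _.
    case: (ltrgtP 0 (x l' 0)) => h.
    - by congr (_ * _); apply/eqP; rewrite eq_le hN // hN.
    - by move: h; rewrite ltNge (proj1 hp).
    - by rewrite -h !mul0r.
  have := sumAx hA x; rewrite hsum => hM.
  have e : (Kmat A c d *m x) i 0 + dotv d x / 2 * c i 0 = (A *m x) i 0.
    by rewrite (AK A c d); ring.
  rewrite /K e.
  have := hN l hl i; rewrite -/M hM => h'.
  apply: le_trans h' _; rewrite le_eqVlt; apply/orP; left; apply/eqP; ring.
split.
  move=> lam hlam; split; [|split].
  + have [x hx] := exist0 hA hn lam.
    exists (dotv d x), x, (lam / 2 * dotv x c); split => //.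
    by apply/(opt_iff hA hn); split => //; rewrite /LP_obj subrr.
  + move=> a b t [x1 [p1 [h1 ->]]] [x2 [p2 [h2 ->]]] t0 t1.
    set x := t *: x1 + (1 - t) *: x2.
    have xE : forall i, x i 0 = t * x1 i 0 + (1 - t) * x2 i 0.
      by move=> i; rewrite !mxE.
    have dotE : forall u : 'cV_n, dotv u x = t * dotv u x1 + (1 - t) * dotv u x2.
      move=> u; rewrite /dotv !mulr_sumr -big_split /=; apply: eq_bigr => i _.
      rewrite xE; ring.
    have dotE' : dotv x c = t * dotv x1 c + (1 - t) * dotv x2 c.
      rewrite /dotv !mulr_sumr -big_split /=; apply: eq_bigr => i _.
      rewrite xE; ring.
    have KE : forall i, (Kmat A c d *m x) i 0 =
        t * (Kmat A c d *m x1) i 0 + (1 - t) * (Kmat A c d *m x2) i 0.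
      move=> i; rewrite !(KxE A c d) !mulr_sumr -big_split /=; apply: eq_bigr => j _.
      rewrite xE; ring.
    have [[hf1 [hx10 hx11]] ho1] := (opt_iff hA hn _ _ _).1 h1.
    have [[hf2 [hx20 hx21]] ho2] := (opt_iff hA hn _ _ _).1 h2.
    have t1' : 0 <= 1 - t by rewrite subr_ge0.
    exists x, (t * p1 + (1 - t) * p2); split; last by rewrite dotE.
    apply/(opt_iff hA hn); split; [split; [|split]|].
    * move=> i; rewrite KE.
      have e1 := ler_wpM2l t0 (hf1 i); have e2 := ler_wpM2l t1' (hf2 i).
      apply: (le_trans _ (lerD e1 e2)).
      by rewrite le_eqVlt; apply/orP; left; apply/eqP; ring.
    * by move=> i; rewrite xE; apply: addr_ge0; apply: mulr_ge0.
    * under eq_bigr do rewrite xE.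
      by rewrite big_split /= -!mulr_sumr hx11 hx21; ring.
    * rewrite /LP_obj dotE'.
      have -> : lam / 2 * (t * dotv x1 c + (1 - t) * dotv x2 c) - (t * p1 + (1 - t) * p2)
        = t * (lam / 2 * dotv x1 c - p1) + (1 - t) * (lam / 2 * dotv x2 c - p2) by ring.
      by apply: addr_ge0; apply: mulr_ge0.
  + by move=> v [x [pi [[[_ hp] _] ->]]]; exact: range hp.
split; first by move=> lam x pi _; exact: part2.
split.
  by move=> x hx /=; split; [exact: range (proj1 hx) | exact: part3].
move=> lam; split.
  move=> [_ [x [pi [hopt hl]]]]; exists x; split => //.
  by apply: part2 hopt _; rewrite hl.
by move=> [x [hx ->]]; split; [exact: range (proj1 hx) | exact: part3].
Qed.
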